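(* Let $X$ be a Banach space and $M,N:\Sigma\to cb(X)$ be $d_H$-multimeasures. Suppose there exists a bounded measurable $\theta:\Omega\to\mathbb R$ such that $\langle y',j\circ M(E)\rangle=\int_E\theta\,d\langle y',j\circ N\rangle$ for all $E\in\Sigma$ and all $y'\in\ell_\infty(B_{X'})'$. Then there exists $d>0$ such that for every $E\in\Sigma$ $$M(E)\subseteq d\,\overline{\mathrm{aco}}\big[\mathcal R(N_E)\cup\mathcal R(-N_E)\big].$$
   Context: $(\Omega,\Sigma)$ is a measurable space, $X$ a Banach space with dual unit ball $B_{X'}$. $cb(X)$: nonempty closed bounded convex subsets of $X$ with Hausdorff metric $d_H$; $s(x',C)=\sup\{\langle x',x\rangle:x\in C\}$. A $d_H$-multimeasure is $M:\Sigma\to cb(X)$ countably additive in $d_H$. $-N$: $E\mapsto\{-x:x\in N(E)\}$. Rådström embedding: $j(A)=s(\cdot,A)|_{B_{X'}}\in\ell_\infty(B_{X'})$. $\Sigma_E=\{F\in\Sigma:F\subseteq E\}$; $\mathcal R(N_E)=\{z\in X:\exists F\in\Sigma_E,\ z\in N(F)\}$, and similarly $\mathcal R(-N_E)$. $\overline{\mathrm{aco}}$ denotes the closed absolutely convex hull in $X$. *)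

(* Defs.v *)
From HB Require Import structures.
From mathcomp Require Import all_boot all_order all_algebra.
From mathcomp Require Import all_classical all_reals all_analysis.
Set Implicit Arguments. Unset Strict Implicit. Unset Printing Implicit Defensive.
Import Order.TTheory GRing.Theory Num.Theory.
Import numFieldNormedType.Exports.
Local Open Scope classical_set_scope.
Local Open Scope ring_scope.

Section Defs.
Context {R : realType} {X : normedModType R}.

Definition in_dual_ball (f : X -> R) : Prop :=
  (forall (a : R) (x y : X), f (a *: x + y) = a * f x + f y) /\
  (forall x : X, `|f x| <= `|x|).

Definition dual_ball : Type := {f : X -> R | in_dual_ball f}.

(* support function s(x', C) (C nonempty bounded, so the sup is finite) *)
Definition supp_fun (f : X -> R) (C : set X) : R :=
  fine (ereal_sup [set (f x)%:E | x in C]).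

(* Radstrom embedding j(A) = s(., A) restricted to B_{X'} *)
Definition radstrom (A : set X) : dual_ball -> R :=
  fun u => supp_fun (proj1_sig u) A.

(* ell_infty(B_{X'}) : bounded functions on B_{X'} with the sup norm *)
Definition linf_bounded (g : dual_ball -> R) : Prop :=
  exists C : R, forall u, `|g u| <= C.

Definition linf_norm (g : dual_ball -> R) : R :=
  fine (ereal_sup [set (`|g u|)%:E | u in [set: dual_ball]]).

(* y' in ell_infty(B_{X'})' : a bounded linear functional on ell_infty(B_{X'})
   (its values outside ell_infty are irrelevant) *)
Definition linf_dual (y : (dual_ball -> R) -> R) : Prop :=
  (forall (a : R) g h, linf_bounded g -> linf_bounded h ->
     y (fun u => a * g u + h u) = a * y g + y h) /\
  (exists C : R, forall g, linf_bounded g -> `|y g| <= C * linf_norm g).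

Definition convex_set_X (C : set X) : Prop :=
  forall x y t, C x -> C y -> 0 <= t <= 1 -> C (t *: x + (1 - t) *: y).

Definition cb (C : set X) : Prop :=
  C !=set0 /\ closed C /\ bounded_set C /\ convex_set_X C.

Definition hausdorff (A B : set X) : \bar R :=
  maxe (ereal_sup [set ereal_inf [set (`|a - b|)%:E | b in B] | a in A])
       (ereal_sup [set ereal_inf [set (`|a - b|)%:E | a in A] | b in B]).

Definition psum (F : nat -> set X) (n : nat) : set X :=
  [set x | exists f : nat -> X, (forall k, (k < n)%N -> F k (f k)) /\
                                x = \sum_(k < n) f k].

Definition dH_multimeasure {d} {T : measurableType d} (M : set T -> set X) : Prop :=
  (forall E, measurable E -> cb (M E)) /\
  (forall F : nat -> set T, (forall n, measurable (F n)) -> trivIset setT F ->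
     (fun n => hausdorff (M (\bigcup_k F k)) (psum (fun k => M (F k)) n))
       @ \oo --> 0%E).

Definition aco (A : set X) : set X :=
  [set x | exists n (a : 'I_n -> R) (v : 'I_n -> X),
     (forall i, A (v i)) /\ \sum_(i < n) `|a i| <= 1 /\
     x = \sum_(i < n) a i *: v i].

Definition closed_aco (A : set X) : set X := closure (aco A).

Definition range_restr {d} {T : measurableType d} (N : set T -> set X) (E : set T)
  : set X := [set z | exists F, measurable F /\ F `<=` E /\ N F z].

Definition neg_mm {d} {T : measurableType d} (N : set T -> set X) : set T -> set X :=
  fun E => [set - x | x in N E].

Definition scale_set (c : R) (A : set X) : set X := [set c *: x | x in A].

End Defs.

(* Main.v *)
Require Import Defs.
From HB Require Import structures.
From mathcomp Require Import all_boot all_order all_algebra.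
From mathcomp Require Import all_classical all_reals all_analysis.
From mathcomp Require Import measurable_realfun.
From mathcomp Require Import ring lra.
Set Implicit Arguments. Unset Strict Implicit. Unset Printing Implicit Defensive.
Import Order.TTheory GRing.Theory Num.Theory.
Import numFieldNormedType.Exports.
Local Open Scope classical_set_scope.
Local Open Scope ring_scope.
Section ML.
Context d (T : measurableType d) (R : realType).
Local Open Scope ereal_scope.

Lemma le_int_restr (m1 m2 : {measure set T -> \bar R}) (D : set T) (mD : measurable D)
  (h : T -> \bar R) :
  (forall A, measurable A -> A `<=` D -> m1 A <= m2 A) ->
  (forall x, 0 <= h x) -> measurable_fun [set: T] h ->
  \int[m1]_(x in D) h x <= \int[m2]_(x in D) h x.
Proof.
move=> m12 h0 mh.
rewrite (eq_measure_integral (mrestr m1 mD)); last first.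
  by move=> A mA AD; rewrite /= /mrestr setIidl.
rewrite [X in _ <= X](eq_measure_integral (mrestr m2 mD)); last first.
  by move=> A mA AD; rewrite /= /mrestr setIidl.
apply: ge0_le_measure_integral => // S mS.
rewrite /mrestr; apply: m12 => //; first exact: measurableI.
Qed.
End ML.
Section ML2.
Context d (T : measurableType d) (R : realType).

Lemma int_bdd (m : {finite_measure set T -> \bar R}) (D : set T) (h : T -> R) (K : R) :
  measurable D -> measurable_fun [set: T] h -> (forall w, `|h w| <= K) ->
  m.-integrable D (EFin \o h).
Proof.
move=> mD mh hK; apply: measurable_bounded_integrable => //.
- by have := fin_num_measure m D mD; rewrite ge0_fin_numE.
- exact: measurable_funS mh.
- rewrite /bounded_near; near=> M => t Dt /=.
  apply: le_trans (hK t) _; near: M; exact: nbhs_pinfty_ge (num_real K).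
Unshelve. all: end_near. Qed.

Lemma int_fin (m : {finite_measure set T -> \bar R}) (D : set T) (h : T -> R) (K : R) :
  measurable D -> measurable_fun [set: T] h -> (forall w, `|h w| <= K) ->
  (\int[m]_(x in D) (h x)%:E \is a fin_num)%E.
Proof. move=> mD mh hK; apply: integrable_fin_num => //; exact: int_bdd mD mh hK. Qed.

Lemma int_shift (m : {finite_measure set T -> \bar R}) (D : set T) (h : T -> R) (K c : R) :
  measurable D -> measurable_fun [set: T] h -> (forall w, `|h w| <= K) ->
  fine (\int[m]_(x in D) (h x + c)%:E) = fine (\int[m]_(x in D) (h x)%:E) + c * fine (m D).
Proof.
move=> mD mh hK.
have -> : (\int[m]_(x in D) (h x + c)%:E = \int[m]_(x in D) ((h x)%:E + cst c%:E x))%E.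
  by apply: eq_integral => x _; rewrite EFinD.
rewrite integralD//; last 2 first.
- exact: int_bdd mD mh hK.
- apply: (@int_bdd _ _ _ `|c|) => //; exact: measurable_cst.
rewrite integral_cst// fineD; last 2 first.
- exact: int_fin mD mh hK.
- by rewrite fin_numM// fin_num_measure.
by rewrite fineM// fin_num_measure.
Qed.
End ML2.
Section ML3.
Context d (T : measurableType d) (R : realType).

Lemma int_neg (m : {finite_measure set T -> \bar R}) (D : set T) (h : T -> R) (K : R) :
  measurable D -> measurable_fun [set: T] h -> (forall w, `|h w| <= K) ->
  fine (\int[m]_(x in D) (- h x)%:E) = - fine (\int[m]_(x in D) (h x)%:E).
Proof.
move=> mD mh hK.
have -> : (\int[m]_(x in D) (- h x)%:E = \int[m]_(x in D) ((-1)%:E * (h x)%:E))%E.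
  by apply: eq_integral => x _; rewrite -EFinM mulN1r.
rewrite integralZl//; last exact: int_bdd mD mh hK.
by rewrite fineM// ?mulN1r//; exact: int_fin mD mh hK.
Qed.

Lemma side_bound (m1 m2 : {finite_measure set T -> \bar R}) (D : set T) (h : T -> R) (K : R) :
  measurable D -> measurable_fun [set: T] h -> (forall w, `|h w| <= K) ->
  (forall A, measurable A -> A `<=` D -> (m1 A <= m2 A)%E) ->
  fine (\int[m1]_(x in D) (h x)%:E) - fine (\int[m2]_(x in D) (h x)%:E)
    <= K * (fine (m2 D) - fine (m1 D)).
Proof.
move=> mD mh hK m12.
have mh' : measurable_fun [set: T] (fun x => h x + K).
  by apply: measurable_funD => //; exact: measurable_cst.
have hK' w : `|h w + K| <= `|K| + K.
  apply: le_trans (ler_normD _ _) _; rewrite addrC lerD2l; exact: hK.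
have h0 w : 0 <= h w + K.
  by move: (hK w); rewrite ler_norml => /andP[hl _]; lra.
have := @le_int_restr _ _ _ m1 m2 D mD (fun x => (h x + K)%:E) m12.
move=> /(_ (fun x => h0 x)).
have : measurable_fun [set: T] (fun x => (h x + K)%:E) by exact/measurable_EFinP.
move=> mm /(_ mm) H.
have := fine_le (int_fin m1 mD mh' hK') (int_fin m2 mD mh' hK') H.
rewrite (int_shift m1 K mD mh hK) (int_shift m2 K mD mh hK).
lra.
Qed.
End ML3.
Section ML4.
Context d (T : measurableType d) (R : realType).

Lemma mlemma (mup mun : {finite_measure set T -> \bar R}) (th : T -> R) (C B : R) (E : set T) :
  0 <= C -> measurable E -> measurable_fun [set: T] th -> (forall w, `|th w| <= C) ->
  (forall F, measurable F -> F `<=` E -> `|fine (mup F) - fine (mun F)| <= B) ->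
  fine (\int[mup]_(w in E) (th w)%:E) - fine (\int[mun]_(w in E) (th w)%:E) <= 2 * C * B.
Proof.
move=> C0 mE mth hC hB.
have mnth : measurable_fun [set: T] (fun x => - th x) by exact: measurableT_comp.
have hnC w : `|- th w| <= C by rewrite normrN.
pose nu := cadd (charge_of_finite_measure mup) (copp (charge_of_finite_measure mun)).
have nuE A : nu A = (mup A - mun A)%E by [].
have [P [N [[mP posP] [mN negN] PN PN0]]] := Hahn_decomposition nu.
have mEP : measurable (E `&` P) by exact: measurableI.
have mEN : measurable (E `&` N) by exact: measurableI.
have finm (m : {finite_measure set T -> \bar R}) A : measurable A -> (m A \is a fin_num)%E.
  by move=> mA; exact: fin_num_measure.
have s1 := side_bound (m1:=mun) (m2:=mup) mEP mnth hnC.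
have s2 := side_bound (m1:=mup) (m2:=mun) mEN mth hC.
have {}s1 : fine (\int[mup]_(x in E `&` P) (th x)%:E) - fine (\int[mun]_(x in E `&` P) (th x)%:E)
    <= C * (fine (mup (E `&` P)) - fine (mun (E `&` P))).
  suff : fine (\int[mun]_(x in E `&` P) (- th x)%:E) - fine (\int[mup]_(x in E `&` P) (- th x)%:E)
    <= C * (fine (mup (E `&` P)) - fine (mun (E `&` P))).
    by rewrite (int_neg mun mEP mth hC) (int_neg mup mEP mth hC); lra.
  apply: s1 => A mA AEP; have H := posP A mA (subset_trans AEP (@subIsetr _ _ _)).
  have : (0 <= mup A - mun A)%E by exact: H.
  by rewrite sube_ge0 ?finm.
have {}s2 : fine (\int[mup]_(x in E `&` N) (th x)%:E) - fine (\int[mun]_(x in E `&` N) (th x)%:E)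
    <= C * (fine (mun (E `&` N)) - fine (mup (E `&` N))).
  apply: s2 => A mA AEN; have H := negN A mA (subset_trans AEN (@subIsetr _ _ _)).
  have : (mup A - mun A <= 0)%E by exact: H.
  by rewrite sube_le0.
have EU : E = (E `&` P) `|` (E `&` N) by rewrite -setIUr PN setIT.
have dj : [disjoint E `&` P & E `&` N].
  by rewrite disj_set2E setIACA -setIA PN0 !setI0.
have split_int (m : {finite_measure set T -> \bar R}) :
    fine (\int[m]_(x in E) (th x)%:E) =
    fine (\int[m]_(x in E `&` P) (th x)%:E) + fine (\int[m]_(x in E `&` N) (th x)%:E).
  rewrite {1}EU integral_setU//; last by rewrite -EU; apply/measurable_EFinP; exact: measurable_funS mth.
  by rewrite fineD// (int_fin m _ mth hC).
rewrite !split_int.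
have b1 := hB _ mEP (@subIsetl _ _ _).
have b2 := hB _ mEN (@subIsetl _ _ _).
have c1 : C * (fine (mup (E `&` P)) - fine (mun (E `&` P))) <= C * B.
  by apply: ler_wpM2l => //; apply: le_trans (ler_norm _) b1.
have c2 : C * (fine (mun (E `&` N)) - fine (mup (E `&` N))) <= C * B.
  by apply: ler_wpM2l => //; apply: le_trans (ler_norm _) _; rewrite distrC.
lra.
Qed.
End ML4.
Section HB.
Context {R : realType} {X : normedModType R}.
Variable p : X -> R.
Hypothesis psub : forall a b, p (a + b) <= p a + p b.
Hypothesis phom : forall t a, 0 < t -> p (t *: a) = t * p a.
Variable y0 : X.
Hypothesis y00 : y0 != 0.

Lemma p0 : p 0 = 0.
Proof.
have := phom 0 (ltr0n R 2); rewrite scaler0; lra.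
Qed.

Definition good (G : set (X * R)) :=
  [/\ G (0, 0),
      (forall a b c, G a -> G b -> G (c *: a.1 + b.1, c * a.2 + b.2)),
      (forall x r s, G (x, r) -> G (x, s) -> r = s),
      (forall x r, G (x, r) -> r <= p x) &
      G (y0, p y0)].

Lemma good_lin G c e x r y s : good G -> G (x, r) -> G (y, s) ->
  G (c *: x + e *: y, c * r + e * s).
Proof.
move=> [G00 Gc _ _ _] Gx Gy.
have := Gc _ _ e Gy G00; rewrite /= addr0 addr0 => Gey.
exact: (Gc _ _ c Gx Gey).
Qed.

Definition G0 : set (X * R) := [set q | exists t, q = (t *: y0, t * p y0)].

Lemma good_G0 : good G0.
Proof.
split.
- by exists 0; rewrite scale0r mul0r.
- move=> [a1 a2] [b1 b2] c [t ->] [t' ->] /=; exists (c * t + t').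
  by rewrite scalerDl scalerA mulrDl mulrA.
- move=> x r s [t [-> ->]] [t' [] /eqP]; rewrite -subr_eq0 -scalerBl scaler_eq0 (negbTE y00) orbF subr_eq0 => /eqP <- ->.
  by [].
- move=> x r [t [-> ->]].
  have [t0|t0|->] := ltgtP t 0; last by rewrite scale0r mul0r p0.
  + have := psub (t *: y0) (- t *: y0); rewrite -scalerDl subrr scale0r p0.
    rewrite (@phom (- t) y0) ?oppr_gt0 //; lra.
  + by rewrite phom.
- by exists 1; rewrite scale1r mul1r.
Qed.

Definition PG (G : set (X * R)) := good G \/ G = set0.

Lemma PG_good G a : PG G -> G a -> good G.
Proof. by case=> // -> . Qed.

Lemma chain_ok (F : set (set (X * R))) : F `<=` PG -> total_on F subset ->
  PG (\bigcup_(G in F) G).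
Proof.
move=> FP tot.
have [[G1 [FG1 gG1]]|nF] := pselect (exists G, F G /\ good G); last first.
  right; apply/seteqP; split => // q [G FG Gq].
  by exfalso; apply: nF; exists G; split => //; exact: PG_good (FP _ FG) Gq.
left; case: (gG1) => G00 _ _ _ Gy0; split.
- by exists G1.
- move=> a b c [Ga FGa aa] [Gb FGb bb].
  have [sab|sba] := tot _ _ FGa FGb.
  + exists Gb => //; case: (PG_good (FP _ FGb) bb) => _ Gc _ _ _; exact: Gc (sab _ aa) bb.
  + exists Ga => //; case: (PG_good (FP _ FGa) aa) => _ Gc _ _ _; exact: Gc aa (sba _ bb).
- move=> x r s [Ga FGa aa] [Gb FGb bb].
  have [sab|sba] := tot _ _ FGa FGb.
  + case: (PG_good (FP _ FGb) bb) => _ _ Gf _ _; exact: Gf (sab _ aa) bb.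
  + case: (PG_good (FP _ FGa) aa) => _ _ Gf _ _; exact: Gf aa (sba _ bb).
- move=> x r [Ga FGa aa]; case: (PG_good (FP _ FGa) aa) => _ _ _ Gb _; exact: Gb.
- by exists G1.
Qed.

Lemma extend A z : good A -> ~ (exists r, A (z, r)) -> exists B, PG B /\ A `<` B.
Proof.
move=> gA nz; case: (gA) => A00 Ac Af Ab Ay.
have Asc c x r : A (x, r) -> A (c *: x, c * r).
  by move=> Axr; have := Ac _ _ c Axr A00; rewrite /= !addr0.
have key x r y s : A (x, r) -> A (y, s) -> r - p (x - z) <= p (y + z) - s.
  move=> Axr Ays; have := Ab _ _ (Ac _ _ 1 Axr Ays); rewrite /= scale1r mul1r => h.
  have := psub (x - z) (y + z).
  have -> : x - z + (y + z) = x + y by rewrite addrACA addNr addr0.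
  lra.
pose S := [set v | exists x r, A (x, r) /\ v = r - p (x - z)].
have S0 : S !=set0 by exists (0 - p (0 - z)), 0, 0.
have Sub : ubound S (p z).
  move=> v [x [r [Axr ->]]]; have := key _ _ _ _ Axr A00; rewrite add0r subr0; exact.
pose al := sup S.
have al_ge x r : A (x, r) -> r - p (x - z) <= al.
  move=> Axr; apply: (ub_le_sup); last by exists x, r.
  by exists (p z).
have al_le y s : A (y, s) -> al <= p (y + z) - s.
  move=> Ays; apply: ge_sup S0 _ => v [x [r [Axr ->]]]; exact: key.
pose B := [set q | exists x r t, A (x, r) /\ q = (x + t *: z, r + t * al)].
have AB : A `<=` B.
  by move=> [x r] Axr; exists x, r, 0; split => //; rewrite scale0r mul0r !addr0.
exists B; split; last first.
  split => // BA; apply: nz; exists al.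
  by apply: BA; exists 0, 0, 1; split => //; rewrite scale1r mul1r !add0r.
left; split.
- by apply: AB.
- move=> _ _ c [x1 [r1 [t1 [A1 ->]]]] [x2 [r2 [t2 [A2 ->]]]] /=.
  exists (c *: x1 + x2), (c * r1 + r2), (c * t1 + t2); split; first exact: (Ac _ _ c A1 A2).
  congr (_, _); last by ring.
  by rewrite scalerDr scalerA scalerDl addrACA.
- move=> x0 r s [x1 [r1 [t1 [A1 [e1 e2]]]]] [x2 [r2 [t2 [A2 [e3 e4]]]]].
  have [t12|t12] := eqVneq t1 t2.
    rewrite e1 -t12 in e3; have x12 := addIr _ e3; rewrite e2 e4 -t12.
    by rewrite x12 in A1; rewrite (Af _ _ _ A1 A2).
  exfalso; apply: nz.
  have tn0 : t1 - t2 != 0 by rewrite subr_eq0.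
  have ez : z = (t1 - t2)^-1 *: x2 + (- (t1 - t2)^-1) *: x1.
    have h : x1 + t1 *: z = x2 + t2 *: z by rewrite -e1 -e3.
    have e5 : (t1 - t2) *: z = x2 - x1.
      apply/eqP; rewrite scalerBl subr_eq addrAC -h addrAC subrr add0r //.
    by rewrite scaleNr -scalerBr -e5 scalerA mulVf // scale1r.
  exists ((t1 - t2)^-1 * r2 + (- (t1 - t2)^-1) * r1); rewrite {1}ez.
  exact: good_lin.
- move=> x0 r [x [r' [t [Axr [-> ->]]]]].
  have [t0|t0|->] := ltgtP t 0; last by rewrite scale0r mul0r !addr0; exact: Ab.
  + pose u := - t; have u0 : 0 < u by rewrite oppr_gt0.
    have := al_ge _ _ (Asc u^-1 _ _ Axr).
    have -> : u^-1 *: x - z = u^-1 *: (x + t *: z).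
      by rewrite scalerDr scalerA /u invrN mulNr mulVf ?lt_eqF // scaleN1r.
    rewrite phom ?invr_gt0 // => h.
    have : u * (u^-1 * r' - u^-1 * p (x + t *: z)) <= u * al by rewrite ler_wpM2l // ltW.
    rewrite mulrBr !mulrA mulfV ?lt0r_neq0 // !mul1r /u; lra.
  + have := al_le _ _ (Asc t^-1 _ _ Axr).
    have -> : t^-1 *: x + z = t^-1 *: (x + t *: z).
      by rewrite scalerDr scalerA mulVf ?gt_eqF // scale1r.
    rewrite phom ?invr_gt0 // => h.
    have : t * al <= t * (t^-1 * p (x + t *: z) - t^-1 * r') by rewrite ler_wpM2l // ltW.
    rewrite mulrBr !mulrA mulfV ?gt_eqF // !mul1r; lra.
- by apply: AB.
Qed.

Lemma hahn_banach : exists f : X -> R,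
  [/\ (forall c a b, f (c *: a + b) = c * f a + f b), (forall x, f x <= p x) & f y0 = p y0].
Proof.
have [A [PA Amax]] := @Zorn_bigcup _ PG chain_ok.
have gA : good A.
  case: PA => // A0; exfalso; apply: (Amax G0); last by left; exact: good_G0.
  rewrite A0; split => // G0s; have := G0s (0, 0).
  by case: good_G0 => + _ _ _ _ => /[swap] /[apply].
have tot z : exists r, A (z, r).
  apply: contrapT => nz; have [B [PB AB]] := extend gA nz; exact: Amax B AB PB.
pose f z := xget 0 [set r | A (z, r)].
have fA z : A (z, f z) by exact: (xgetPex 0 (tot z)).
case: gA => A00 Ac Af Ab Ay.
exists f; split.
- by move=> c a b; apply: (Af (c *: a + b)); [exact: fA| exact: (Ac _ _ c (fA a) (fA b))].
- by move=> x; exact: Ab (fA x).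
- exact: Af (fA y0) Ay.
Qed.

End HB.
Section Sep.
Context {R : realType} {X : normedModType R}.
Variable A : set X.

Definition Q (w : X) (s : R) := exists n (a : 'I_n -> R) (v : 'I_n -> X),
  (forall i, A (v i)) /\ \sum_(i < n) `|a i| <= s /\ w = \sum_(i < n) a i *: v i.

Lemma Q_ge0 w s : Q w s -> 0 <= s.
Proof. by move=> [n [a [v [_ [h _]]]]]; apply: le_trans h; apply: sumr_ge0. Qed.

Lemma Q0 : Q 0 0.
Proof. by exists 0%N, (fun=> 0), (fun=> 0); rewrite !big_ord0; split => // -[]. Qed.

Lemma Q1 a : A a -> Q a 1.
Proof.
move=> Aa; exists 1%N, (fun=> 1), (fun=> a); rewrite !big_ord1 normr1 scale1r.
by split.
Qed.

Lemma Q_mono w s s' : Q w s -> s <= s' -> Q w s'.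
Proof. by move=> [n [a [v [h1 [h2 h3]]]]] ss; exists n, a, v; split => //; split => //; apply: le_trans ss. Qed.

Lemma Q_scale w s t : Q w s -> Q (t *: w) (`|t| * s).
Proof.
move=> [n [a [v [h1 [h2 ->]]]]]; exists n, (fun i => t * a i), v; split => //; split.
  by under eq_bigr do rewrite normrM; rewrite -mulr_sumr ler_wpM2l.
by rewrite scaler_sumr; apply: eq_bigr => i _; rewrite scalerA.
Qed.

Lemma Q_add w1 s1 w2 s2 : Q w1 s1 -> Q w2 s2 -> Q (w1 + w2) (s1 + s2).
Proof.
move=> [n1 [a1 [v1 [h1 [h2 ->]]]]] [n2 [a2 [v2 [k1 [k2 ->]]]]].
pose a (i : 'I_(n1 + n2)) := match fintype.split i with inl j => a1 j | inr j => a2 j end.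
pose v (i : 'I_(n1 + n2)) := match fintype.split i with inl j => v1 j | inr j => v2 j end.
have al i : fintype.split (lshift n2 i) = inl i := unsplitK (inl _ i).
have ar i : fintype.split (rshift n1 i) = inr i := unsplitK (inr _ i).
exists (n1 + n2)%N, a, v; split.
  by move=> i; rewrite /v; case: (fintype.split i).
rewrite !big_split_ord /a /v; split.
  by under eq_bigr do rewrite al; under [X in _ + X <= _]eq_bigr do rewrite ar; exact: lerD.
by congr (_ + _); apply: eq_bigr => i _; rewrite ?al ?ar.
Qed.
Section gauge.
Variable del : R.
Hypothesis del0 : 0 < del.

Definition PS z := [set e | exists w s, Q w s /\ e = s + `|z - w| / del].
Definition pg z := inf (PS z).

Lemma PS_n0 z : PS z !=set0.
Proof. by exists (0 + `|z - 0| / del), 0, 0; split => //; exact: Q0. Qed.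

Lemma PS_lb z : has_lbound (PS z).
Proof.
exists 0 => e [w [s [Qws ->]]]; apply: addr_ge0; first exact: Q_ge0 Qws.
by apply: divr_ge0 => //; exact: ltW.
Qed.

Lemma pg_le z w s : Q w s -> pg z <= s + `|z - w| / del.
Proof. by move=> Qws; apply: ge_inf (PS_lb z) _ _; exists w, s. Qed.

Lemma pg_ge z b : (forall w s, Q w s -> b <= s + `|z - w| / del) -> b <= pg z.
Proof. by move=> h; apply: lb_le_inf (PS_n0 z) _ => e [w [s [Qws ->]]]; exact: h. Qed.

Lemma pg_sub a b : pg (a + b) <= pg a + pg b.
Proof.
have H w1 s1 w2 s2 : Q w1 s1 -> Q w2 s2 ->
    pg (a + b) <= (s1 + `|a - w1| / del) + (s2 + `|b - w2| / del).
  move=> Q1 Q2; apply: le_trans (pg_le _ (Q_add Q1 Q2)) _.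
  have : `|a + b - (w1 + w2)| / del <= (`|a - w1| + `|b - w2|) / del.
    apply: ler_wpM2r; first by rewrite invr_ge0 ltW.
    by rewrite opprD addrACA ler_normD.
  rewrite mulrDl; lra.
have H2 w2 s2 : Q w2 s2 -> pg (a + b) - (s2 + `|b - w2| / del) <= pg a.
  by move=> Q2; apply: pg_ge => w1 s1 Q1; have := H _ _ _ _ Q1 Q2; lra.
suff : pg (a + b) - pg a <= pg b by lra.
by apply: pg_ge => w2 s2 Q2; have := H2 _ _ Q2; lra.
Qed.

Lemma pg_hom_le t a : 0 < t -> pg (t *: a) <= t * pg a.
Proof.
move=> t0; rewrite -ler_pdivrMl //; apply: pg_ge => w s Qws.
rewrite ler_pdivrMl //; apply: le_trans (pg_le _ (Q_scale t Qws)) _.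
rewrite -scalerBr normrZ gtr0_norm //; lra.
Qed.

Lemma pg_hom t a : 0 < t -> pg (t *: a) = t * pg a.
Proof.
move=> t0; apply/le_anti/andP; split; first exact: pg_hom_le.
have := @pg_hom_le t^-1 (t *: a); rewrite invr_gt0 scalerA mulVf ?gt_eqF // scale1r.
move=> /(_ t0) h; rewrite -ler_pdivlMl // ; exact: h.
Qed.

End gauge.

Lemma separation y : ~ closure (aco A) y -> exists (u : X -> R) (e : R),
  [/\ 0 < e, in_dual_ball u, e <= u y & forall a, A a -> u a <= e].
Proof.
move=> /existsNP [B /not_implyP [nB hB]].
move: nB => /nbhs_ballP [del /= del0 ballB].
have far w : aco A w -> del <= `|y - w|.
  move=> acw; rewrite leNgt; apply/negP => yw; apply: hB; exists w; split => //.
  apply: ballB; rewrite -ball_normE /=; exact: yw.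
have y0 : y != 0.
  apply/eqP => y0; have := far 0 (Q_mono Q0 ler01); rewrite y0 subrr normr0; lra.
have [f [flin fp fy]] := hahn_banach (pg_sub del0) (pg_hom del0) y0.
have f0 : f 0 = 0.
  have := flin 1 0 0; rewrite scale1r addr0 mul1r; lra.
have fN z : f (- z) = - f z.
  by have := flin (-1) z 0; rewrite addr0 f0 addr0 scaleN1r mulN1r.
have fb z : f z <= `|z| / del.
  apply: le_trans (fp z) _; apply: le_trans (pg_le del0 z Q0) _; rewrite subr0 add0r //.
have py : 1 <= pg del y.
  apply: pg_ge => w s Qws.
  have s0 := Q_ge0 Qws.
  have [s1|s1] := leP s 1.
    have acw : aco A w by exact: Q_mono Qws s1.
    have := far w acw => h.
    have : 1 <= `|y - w| / del by rewrite ler_pdivlMr // mul1r.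
    lra.
  have : 0 <= `|y - w| / del by apply: divr_ge0 => //; exact: ltW.
  lra.
exists (fun z => del * f z), del; split => //.
- split.
    by move=> c a b; rewrite flin mulrDr mulrCA.
  move=> z; rewrite normrM gtr0_norm // -ler_pdivlMl // mulrC ler_norml.
  have := fb z; have := fb (- z); rewrite fN normrN => h1 h2.
  apply/andP; split; lra.
- by rewrite fy -{1}(mulr1 del) ler_pM2l.
- move=> a Aa; rewrite -{2}(mulr1 del) ler_pM2l //.
  apply: le_trans (fp a) _; apply: le_trans (pg_le del0 a (Q1 Aa)) _.
  by rewrite subrr normr0 mul0r addr0.
Qed.

End Sep.
Section Final.
Context {R : realType} {X : normedModType R}.

Lemma sup_between (S : set (\bar R)) (a b : R) : S a%:E -> ubound S b%:E ->
  a <= fine (ereal_sup S) /\ fine (ereal_sup S) <= b.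
Proof.
move=> Sa ub; have h1 := ereal_sup_ubound Sa; have h2 := ge_ereal_sup ub.
move: h1 h2; case: (ereal_sup S) => [r| |] //=; by rewrite !lee_fin.
Qed.

Lemma supp_between (u : X -> R) (S : set X) b s : S s -> (forall t, S t -> u t <= b) ->
  u s <= supp_fun u S /\ supp_fun u S <= b.
Proof.
move=> Ss ub; apply: sup_between; first by exists s.
by move=> _ [t St <-]; rewrite lee_fin; exact: ub.
Qed.

Lemma bounded_ex (S : set X) : bounded_set S -> exists K, forall s, S s -> `|s| <= K.
Proof. by move=> /pinfty_ex_gt0[K _ HK]; exists K. Qed.

End Final.
Unset Implicit Arguments.
Theorem mainTheorem15 (R : realType) (X : completeNormedModType R)
  (d : measure_display) (T : measurableType d)
  (M N : set T -> set X) :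
  dH_multimeasure M -> dH_multimeasure N ->
  (exists theta : T -> R,
     measurable_fun setT theta /\ (exists C : R, forall w, `|theta w| <= C) /\
     forall y : (@dual_ball R X -> R) -> R, linf_dual y ->
       exists (mup mun : {finite_measure set T -> \bar R}),
         (forall E, measurable E ->
            y (radstrom (N E)) = fine (mup E) - fine (mun E)) /\
         (forall E, measurable E ->
            y (radstrom (M E)) =
              fine (\int[mup]_(w in E) (theta w)%:E)
              - fine (\int[mun]_(w in E) (theta w)%:E))) ->
  exists c : R, 0 < c /\
    forall E, measurable E ->
      M E `<=` scale_set c
        (closed_aco (range_restr N E `|` range_restr (neg_mm N) E)).
Proof.
move=> [hM _] [hN _] [th [mth [[C hC] hy]]].
have hC' w : `|th w| <= `|C| by apply: le_trans (hC w) (ler_norm C).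
pose c := 2 * `|C| + 1.
have c0 : 0 < c by rewrite /c; apply: ltr_wpDl => //; apply: mulr_ge0.
exists c; split => // E mE x MEx.
set A := range_restr N E `|` range_restr (neg_mm N) E.
exists (c^-1 *: x); last by rewrite scalerA mulfV ?gt_eqF // scale1r.
apply: contrapT => nz.
have [u [e [e0 hu eu ue]]] := separation nz.
pose ub : @dual_ball R X := exist _ u hu.
pose y := fun g : @dual_ball R X -> R => g ub.
have ly : linf_dual y.
  split; first by move=> *.
  exists 1 => g [K hK]; rewrite mul1r /y /linf_norm.
  pose S := [set (`|g v|)%:E | v in [set: @dual_ball R X]].
  have Sa : S (`|g ub|)%:E by exists ub.
  have Sb : ubound S K%:E by move=> _ [v _ <-]; rewrite lee_fin.
  have [h1 _] := sup_between Sa Sb.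
  exact: h1.
have [mup [mun [hyN hyM]]] := hy y ly.
have u0 : u 0 = 0.
  by have := hu.1 1 0 0; rewrite scale1r addr0 mul1r; lra.
have uN z : u (- z) = - u z.
  by have := hu.1 (-1) z 0; rewrite addr0 u0 addr0 scaleN1r mulN1r.
have bnd F : measurable F -> F `<=` E -> `|fine (mup F) - fine (mun F)| <= e.
  move=> mF FE; rewrite -(hyN F mF) /y /= /radstrom /=.
  have [[s0 Ns0] _] := hN F mF.
  have NA t : N F t -> u t <= e.
    by move=> Nt; apply: ue; left; exists F.
  have [h1 h2] := supp_between Ns0 NA.
  rewrite ler_norml; apply/andP; split => //.
  have : u (- s0) <= e by apply: ue; right; exists F; split => //; split => //; exists s0.
  rewrite uN; lra.
have key := mlemma (mup:=mup) (mun:=mun) (normr_ge0 C) mE mth hC' bnd.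
rewrite -(hyM E mE) /y /= /radstrom /= in key.
have [_ [_ [hb _]]] := hM E mE.
have [K HK] := bounded_ex hb.
have ubM t : M E t -> u t <= K.
  by move=> Mt; apply: le_trans (HK t Mt); apply: le_trans (ler_norm _) _; exact: hu.2.
have [h1 _] := supp_between MEx ubM.
have ux : u x = c * u (c^-1 *: x).
  have := hu.1 c (c^-1 *: x) 0; rewrite addr0 u0 addr0 scalerA mulfV ?gt_eqF // scale1r //.
have : c * e <= c * u (c^-1 *: x) by rewrite ler_pM2l.
rewrite -ux /c mulrDl mul1r => h.
have : 2 * `|C| * e + e <= 2 * `|C| * e by lra.
lra.
Qed.
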